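(* In a strongly causal, digitalizable OPT in which every state admits a refinement into pure states, let $\rho\in\mathsf{St}_1(\mathrm{A})$. Let $E^{\rm pur}_{N,M,\varepsilon}(\rho)$ be the set of compression schemes $(\mathcal E,\mathcal D)$ such that $\sup\sum_i p_i\|((\mathcal D\circ\mathcal E)\boxtimes\mathcal I_{\mathrm{C}})\Phi_i-\Phi_i\|_{\rm op}<\varepsilon$, where the supremum runs over all systems $\mathrm{C}$, all dilations $\Omega\in\mathsf{St}_1(\mathrm{A}^{\boxtimes N}\mathrm{C})$ of $\rho^{\boxtimes N}$ and all decompositions $\Omega=\sum_ip_i\Phi_i$ with $p_i\ge0$, $\{p_i\Phi_i\}$ a refinement of $\Omega$ and each $\Phi_i$ a normalized pure state. Define $I^{\rm pur}(\rho):=\lim_{\varepsilon\to0}\limsup_{N\to\infty}\min\{M:E^{\rm pur}_{N,M,\varepsilon}(\rho)\ne\emptyset\}/N$. Then $I(\rho)=I^{\rm pur}(\rho)$.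
   Context: Framework (operational probabilistic theory, OPT): each system $\mathrm{A}$ has states $\mathsf{St}(\mathrm{A})$ (normalized ones $\mathsf{St}_1(\mathrm{A})$), effects $\mathsf{Eff}(\mathrm{A})$, transformations $\mathsf{Tr}(\mathrm{A}\to\mathrm{B})$ (channels $\mathsf{Tr}_1$), sequential ($\circ$) and parallel ($\boxtimes$) composition, pairing $(a|\rho)$. Strong causality: for every test $\{\mathcal A_i\}$ and tests $\{\mathcal B^i_j\}_j$, $\{\mathcal B^i_j\circ\mathcal A_i\}$ is a test; unique deterministic effect $e_{\mathrm{A}}$. Operational norm $\|\delta\|_{\rm op}:=\sup_{a\in\mathsf{Eff}(\mathrm{A})}((2a-e_{\mathrm{A}})|\delta)$. A refinement of a state $\Omega$ is a collection of states $\{\Psi_i\}$ contained in a preparation test with $\sum_i\Psi_i=\Omega$; a refinement is trivial if each element is $\lambda_i\Omega$, $\lambda_i\in[0,1]$; a state is pure if it has only trivial refinements. A dilation of $\rho\in\mathsf{St}(\mathrm{A})$ is $\Psi\in\mathsf{St}(\mathrm{A}\mathrm{C})$ with $(\mathcal I_{\mathrm{A}}\boxtimes e_{\mathrm{C}})\Psi=\rho$. Digitalizability: there is an obit system $\mathrm{O}$ such that every system $\mathrm{X}$ can be perfectly (invertibly, via channels) encoded into $\mathrm{O}^{\boxtimes k}$ for some finite $k$. Information content: compression scheme $\mathcal E\in\mathsf{Tr}_1(\mathrm{A}^{\boxtimes N}\to\mathrm{O}^{\boxtimes M})$, $\mathcal D\in\mathsf{Tr}_1(\mathrm{O}^{\boxtimes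 M}\to\mathrm{A}^{\boxtimes N})$; $E_{N,M,\varepsilon}(\rho)$ is the set of schemes with $\sup_{\mathrm{C},\{\Psi_i\}}\sum_i\|((\mathcal D\circ\mathcal E)\boxtimes\mathcal I_{\mathrm{C}})\Psi_i-\Psi_i\|_{\rm op}<\varepsilon$, over all systems $\mathrm{C}$ and refinements $\{\Psi_i\}\subseteq\mathsf{St}(\mathrm{A}^{\boxtimes N}\mathrm{C})$ of dilations of $\rho^{\boxtimes N}$; $I(\rho):=\lim_{\varepsilon\to0}\limsup_{N\to\infty}\min\{M:E_{N,M,\varepsilon}(\rho)\ne\emptyset\}/N$. *)

(* Defs.v *)
From HB Require Import structures.
From mathcomp Require Import all_boot all_order all_algebra.
From mathcomp Require Import all_classical all_reals all_analysis.
Set Implicit Arguments.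
Unset Strict Implicit.
Unset Printing Implicit Defensive.
Import Order.TTheory GRing.Theory Num.Theory.
Local Open Scope ring_scope.
Local Open Scope classical_set_scope.

(* Systems form a (strict) monoid under parallel composition with unit the   *)
(* trivial system [I].  For every pair of systems, [tr A B] is the real span *)
(* of the transformations A -> B (the usual linear extension of the set of  *)
(* events); the physical transformations are the elements of tests.  States *)
(* are transformations I -> A, effects A -> I, and [tr I I] is identified   *)
(* with the reals via [prob] (so the pairing (a|rho) is prob (comp a rho)). *)
Record OPT (R : realType) := MkOPT {
  sys : Type;
  I : sys;
  tens : sys -> sys -> sys;
  tensA : forall A B C, tens A (tens B C) = tens (tens A B) C;
  tens1s : forall A, tens I A = A;
  tenss1 : forall A, tens A I = A;
  tr : sys -> sys -> lmodType R;
  comp : forall A B C, tr B C -> tr A B -> tr A C;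
  idt : forall A, tr A A;
  par : forall A B C D, tr A B -> tr C D -> tr (tens A C) (tens B D);
  prob : tr I I -> R;
  test : forall A B, seq (tr A B) -> Prop;
  compA : forall A B C D (h : tr C D) (g : tr B C) (f : tr A B),
      comp h (comp g f) = comp (comp h g) f;
  comp1f : forall A B (f : tr A B), comp (idt B) f = f;
  compf1 : forall A B (f : tr A B), comp f (idt A) = f;
  comp_linl : forall A B C (a : R) (g g' : tr B C) (f : tr A B),
      comp (a *: g + g') f = a *: comp g f + comp g' f;
  comp_linr : forall A B C (a : R) (g : tr B C) (f f' : tr A B),
      comp g (a *: f + f') = a *: comp g f + comp g f';
  par_linl : forall A B C D (a : R) (f f' : tr A B) (g : tr C D),
      par (a *: f + f') g = a *: par f g + par f' g;
  par_linr : forall A B C D (a : R) (f : tr A B) (g g' : tr C D),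
      par f (a *: g + g') = a *: par f g + par f g';
  par_comp : forall A B C A' B' C' (g : tr B C) (f : tr A B)
      (g' : tr B' C') (f' : tr A' B'),
      comp (par g g') (par f f') = par (comp g f) (comp g' f');
  par_id : forall A B, par (idt A) (idt B) = idt (tens A B);
  par_assoc : forall A B C A' B' C' (f : tr A A') (g : tr B B') (h : tr C C'),
      eq_rect _ (fun X => tr X _) (eq_rect _ (tr _) (par f (par g h)) _
        (tensA A' B' C')) _ (tensA A B C) = par (par f g) h;
  par_scall : forall A B (p : tr I I) (f : tr A B),
      eq_rect _ (fun X => tr X B) (eq_rect _ (tr _) (par p f) _ (tens1s B))
        _ (tens1s A) = prob p *: f;
  par_scalr : forall A B (p : tr I I) (f : tr A B),
      eq_rect _ (fun X => tr X B) (eq_rect _ (tr _) (par f p) _ (tenss1 B))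
        _ (tenss1 A) = prob p *: f;
  prob_lin : forall (a : R) (p q : tr I I), prob (a *: p + q) = a * prob p + prob q;
  prob_inj : injective prob;
  prob_id : prob (idt I) = 1;
  prob_comp : forall p q : tr I I, prob (comp p q) = prob p * prob q;
  test_perm : forall A B (s t : seq (tr A B)), perm_eq s t -> test s -> test t;
  test_coarse : forall A B (f g : tr A B) s, test (f :: g :: s) -> test (f + g :: s);
  test_id : forall A, test [:: idt A];
  test_seq : forall A B C (s : seq (tr A B)) (t : seq (tr B C)),
      test s -> test t -> test [seq comp g f | f <- s, g <- t];
  test_par : forall A B C D (s : seq (tr A B)) (t : seq (tr C D)),
      test s -> test t -> test [seq par f g | f <- s, g <- t];
  test_trivial : forall s : seq (tr I I), test s ->
      (forall p, p \in s -> 0 <= prob p) /\ \sum_(p <- s) prob p = 1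
}.

Arguments I {R}.
Arguments tens {R T} : rename.
Arguments tr {R}.
Arguments comp {R T A B C} : rename.
Arguments idt {R T} A : rename.
Arguments par {R T A B C D} : rename.
Arguments prob {R T} : rename.
Arguments test {R T A B} : rename.

Section OPTdefs.
Variables (R : realType) (T : OPT R).
Local Notation sys := (sys T).
Local Notation tr := (@tr R T).
Local Notation I := (I T).

Definition castTr (A A' B B' : sys) (e1 : A = A') (e2 : B = B') (f : tr A B)
  : tr A' B' := match e1, e2 with erefl, erefl => f end.

Definition event (A B : sys) (f : tr A B) : Prop :=
  exists s, test s /\ f \in s.
Definition is_state (A : sys) (rho : tr I A) : Prop := event rho.
Definition is_effect (A : sys) (a : tr A I) : Prop := event a.
Definition deterministic (A B : sys) (f : tr A B) : Prop := test [:: f].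
Definition normalized_state (A : sys) (rho : tr I A) : Prop := deterministic rho.
Definition channel (A B : sys) (f : tr A B) : Prop := deterministic f.

Definition pairing (A : sys) (a : tr A I) (rho : tr I A) : R := prob (comp a rho).

(* refinement of a state: a collection (with multiplicities) contained in a
   preparation test, summing to the state *)
Definition refinement (A : sys) (Om : tr I A) (s : seq (tr I A)) : Prop :=
  (exists u, test (s ++ u)) /\ \sum_(x <- s) x = Om.

Definition pure (A : sys) (Om : tr I A) : Prop :=
  is_state Om /\
  forall s, refinement Om s -> forall x, x \in s ->
    exists lam : R, 0 <= lam <= 1 /\ x = lam *: Om.

Fixpoint spow (A : sys) (n : nat) : sys :=
  match n with 0 => I | n'.+1 => tens (spow A n') A end.
Fixpoint stpow (A : sys) (rho : tr I A) (n : nat) : tr I (spow A n) :=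
  match n return tr I (spow A n) with
  | 0 => idt I
  | n'.+1 => castTr (@tens1s R T I) (erefl _) (par (stpow rho n') rho)
  end.
End OPTdefs.

Arguments castTr {R T A A' B B'}.

Section OPTdefs2.
Variables (R : realType) (T : OPT R).
Local Notation sys := (sys T).
Local Notation tr := (@tr R T).
Local Notation I := (I T).

(* Causality: [e] is the unique deterministic effect on every system. *)
Definition deterministic_effect (e : forall A : sys, tr A I) : Prop :=
  forall A, deterministic (e A) /\ forall a : tr A I, deterministic a -> a = e A.

Definition strongly_causal : Prop :=
  forall (A B C : sys) (s : seq (tr A B)) (F : nat -> seq (tr B C)),
    test s -> (forall i, (i < size s)%N -> test (F i)) ->
    test (flatten [seq [seq comp g (nth 0 s i) | g <- F i] | i <- iota 0 (size s)]).

(* In a causal OPT every state is proportional to a normalized state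
   (standard normalization property of causal theories) *)
Definition normalization_property (e : forall A : sys, tr A I) : Prop :=
  forall (A : sys) (rho : tr I A), is_state rho ->
    exists rhobar : tr I A, normalized_state rhobar /\
      rho = pairing (e A) rho *: rhobar.

Definition digitalizable (O : sys) : Prop :=
  forall X : sys, exists k : nat, exists (Enc : tr X (spow O k)) (Dec : tr (spow O k) X),
    channel Enc /\ channel Dec /\ comp Dec Enc = idt X.

Definition pure_refinable : Prop :=
  forall (A : sys) (Om : tr I A), is_state Om ->
    exists s, refinement Om s /\ forall x, x \in s -> pure x.

Variable e : forall A : sys, tr A I.

Definition op_norm (A : sys) (delta : tr I A) : \bar R :=
  ereal_sup [set (prob (comp (2%:R *: a - e A) delta))%:E | a in [set a | is_effect a]].

Definition dilation (A C : sys) (rho : tr I A) (Psi : tr I (tens A C)) : Prop :=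
  is_state Psi /\
  castTr (erefl I) (@tenss1 R T A) (comp (par (idt A) (e C)) Psi) = rho.

Definition cerr (X Y C : sys) (Enc : tr X Y) (Dec : tr Y X) (Psi : tr I (tens X C)) : \bar R :=
  op_norm (comp (par (comp Dec Enc) (idt C)) Psi - Psi).

Definition Eerrs (O A : sys) (rho : tr I A) (N M : nat)
    (Enc : tr (spow A N) (spow O M)) (Dec : tr (spow O M) (spow A N)) : set (\bar R) :=
  [set x | exists (C : sys) (Psi : tr I (tens (spow A N) C)) s,
        dilation (stpow rho N) Psi /\ refinement Psi s /\
        x = (\sum_(Psi_i <- s) cerr Enc Dec Psi_i)%E].

Definition Eset (O A : sys) (rho : tr I A) (N M : nat) (eps : R) :
    set (tr (spow A N) (spow O M) * tr (spow O M) (spow A N)) :=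
  [set ED | channel ED.1 /\ channel ED.2 /\
    (ereal_sup (Eerrs rho ED.1 ED.2) < eps%:E)%E].

Definition Epurerrs (O A : sys) (rho : tr I A) (N M : nat)
    (Enc : tr (spow A N) (spow O M)) (Dec : tr (spow O M) (spow A N)) : set (\bar R) :=
  [set x | exists (C : sys) (Om : tr I (tens (spow A N) C))
        (d : seq (R * tr I (tens (spow A N) C))),
        normalized_state Om /\ dilation (stpow rho N) Om /\
        (forall pPhi, pPhi \in d -> 0 <= pPhi.1 /\
            normalized_state pPhi.2 /\ pure pPhi.2) /\
        refinement Om [seq pPhi.1 *: pPhi.2 | pPhi <- d] /\
        x = (\sum_(pPhi <- d) ((pPhi.1)%:E * cerr Enc Dec pPhi.2))%E].

Definition Epurset (O A : sys) (rho : tr I A) (N M : nat) (eps : R) :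
    set (tr (spow A N) (spow O M) * tr (spow O M) (spow A N)) :=
  [set ED | channel ED.1 /\ channel ED.2 /\
    (ereal_sup (Epurerrs rho ED.1 ED.2) < eps%:E)%E].

Definition min_rate (P : nat -> Prop) (N : nat) : \bar R :=
  (ereal_inf [set (M%:R)%:E | M in P] * (N%:R^-1)%:E)%E.

Definition info_content (O A : sys) (rho : tr I A) : \bar R :=
  lim ((fun eps : R => limn_esup (fun N =>
          min_rate (fun M => @Eset O A rho N M eps !=set0) N)) @ 0^'+).

Definition info_content_pur (O A : sys) (rho : tr I A) : \bar R :=
  lim ((fun eps : R => limn_esup (fun N =>
          min_rate (fun M => @Epurset O A rho N M eps !=set0) N)) @ 0^'+).
End OPTdefs2.

(* Main.v *)
Require Import Defs.
From HB Require Import structures.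
From mathcomp Require Import all_boot all_order all_algebra.
From mathcomp Require Import all_classical all_reals all_analysis.
Set Implicit Arguments.
Unset Strict Implicit.
Unset Printing Implicit Defensive.
Import Order.TTheory GRing.Theory Num.Theory.
Local Open Scope ring_scope.
Notation comp := Defs.comp.
Notation prob := Defs.prob.
Notation test := Defs.test.
Notation par := Defs.par.
Notation idt := Defs.idt.

Section Alg.
Variables (R : realType) (T : OPT R).
Local Notation sys := (sys T).
Local Notation tr := (@tr R T).
Local Notation I := (Defs.I T).

Lemma comp0r (A B C : sys) (g : tr B C) : comp g (0 : tr A B) = 0.
Proof.
have := comp_linr 1 g (0 : tr A B) 0 => h; rewrite !scale1r !addr0 in h.
by apply: (addrI (comp g (0 : tr A B))); rewrite addr0 -h.
Qed.
Lemma compZr (A B C : sys) (g : tr B C) a (f : tr A B) : comp g (a *: f) = a *: comp g f.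
Proof. by have := comp_linr a g f 0; rewrite !addr0 comp0r addr0. Qed.
Lemma compDr (A B C : sys) (g : tr B C) (f f' : tr A B) : comp g (f + f') = comp g f + comp g f'.
Proof. by have := comp_linr 1 g f f'; rewrite !scale1r. Qed.
Lemma compNr (A B C : sys) (g : tr B C) (f : tr A B) : comp g (- f) = - comp g f.
Proof. by rewrite -scaleN1r compZr scaleN1r. Qed.
Lemma compBr (A B C : sys) (g : tr B C) (f f' : tr A B) : comp g (f - f') = comp g f - comp g f'.
Proof. by rewrite compDr compNr. Qed.
Lemma comp_sumr (A B C : sys) (g : tr B C) (J : Type) (s : seq J) (F : J -> tr A B) :
  comp g (\sum_(x <- s) F x) = \sum_(x <- s) comp g (F x).
Proof. elim: s => [|x s IH]; first by rewrite !big_nil comp0r.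
by rewrite !big_cons compDr IH. Qed.

Lemma comp0l (A B C : sys) (f : tr A B) : comp (0 : tr B C) f = 0.
Proof.
have := comp_linl 1 (0 : tr B C) 0 f => h; rewrite !scale1r !addr0 in h.
by apply: (addrI (comp (0 : tr B C) f)); rewrite addr0 -h.
Qed.
Lemma compZl (A B C : sys) (g : tr B C) a (f : tr A B) : comp (a *: g) f = a *: comp g f.
Proof. by have := comp_linl a g 0 f; rewrite !addr0 comp0l addr0. Qed.
Lemma compDl (A B C : sys) (g g' : tr B C) (f : tr A B) : comp (g + g') f = comp g f + comp g' f.
Proof. by have := comp_linl 1 g g' f; rewrite !scale1r. Qed.
Lemma compNl (A B C : sys) (g : tr B C) (f : tr A B) : comp (- g) f = - comp g f.
Proof. by rewrite -scaleN1r compZl scaleN1r. Qed.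
Lemma compBl (A B C : sys) (g g' : tr B C) (f : tr A B) : comp (g - g') f = comp g f - comp g' f.
Proof. by rewrite compDl compNl. Qed.

Lemma prob0 : prob (0 : tr I I) = 0.
Proof.
have := prob_lin 1 (0 : tr I I) 0; rewrite scale1r addr0 mul1r => h.
by apply: (addrI (prob (0 : tr I I))); rewrite addr0 -h.
Qed.
Lemma probZ a (p : tr I I) : prob (a *: p) = a * prob p.
Proof. by have := prob_lin a p 0; rewrite !addr0 prob0 addr0. Qed.
Lemma probD (p q : tr I I) : prob (p + q) = prob p + prob q.
Proof. by have := prob_lin 1 p q; rewrite scale1r mul1r. Qed.
Lemma probB (p q : tr I I) : prob (p - q) = prob p - prob q.
Proof. by rewrite probD -scaleN1r probZ mulN1r. Qed.
Lemma prob_sum (J : Type) (s : seq J) (F : J -> tr I I) :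
  prob (\sum_(x <- s) F x) = \sum_(x <- s) prob (F x).
Proof. elim: s => [|x s IH]; first by rewrite !big_nil prob0.
by rewrite !big_cons probD IH. Qed.

Lemma scal_id (p : tr I I) : p = prob p *: idt I.
Proof. by apply: prob_inj; rewrite probZ prob_id mulr1. Qed.
Lemma comp_scal (Y : sys) (g : tr I Y) (p : tr I I) : comp g p = prob p *: g.
Proof. by rewrite {1}(scal_id p) compZr compf1. Qed.

End Alg.
Section Caus.
Variables (R : realType) (T : OPT R) (e : forall A : sys T, tr T A (Defs.I T)).
Local Notation sys := (sys T).
Local Notation tr := (@tr R T).
Local Notation I := (Defs.I T).
Hypothesis de : deterministic_effect e.

Lemma test11 (A B C : sys) (f : tr A B) (g : tr B C) :
  test [:: f] -> test [:: g] -> test [:: comp g f].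
Proof. by move=> hf hg; have := test_seq hf hg. Qed.

Lemma testpar11 (A B C D : sys) (f : tr A B) (g : tr C D) :
  test [:: f] -> test [:: g] -> test [:: par f g].
Proof. by move=> hf hg; have := test_par hf hg. Qed.

Lemma e_det (A : sys) : test [:: e A].
Proof. by case: (de A). Qed.

Lemma e_effect (A : sys) : is_effect (e A).
Proof. by exists [:: e A]; split; [exact: e_det | rewrite mem_seq1]. Qed.

Lemma det_prob (p : tr I I) : test [:: p] -> prob p = 1.
Proof. by move=> /test_trivial [_]; rewrite big_seq1. Qed.

Lemma pairing_ge0 (X : sys) (tau : seq (tr I X)) x :
  test tau -> x \in tau -> 0 <= pairing (e X) x.
Proof.
move=> ht hx; have /test_trivial [hp _] := test_seq ht (e_det X).
apply: hp; apply/allpairsP; exists (x, e X) => /=; split => //.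
by rewrite mem_seq1.
Qed.

Lemma state_ge0 (X : sys) (x : tr I X) : is_state x -> 0 <= pairing (e X) x.
Proof. by case=> tau [ht hx]; apply: pairing_ge0 ht hx. Qed.

Lemma pairing_norm (X : sys) (x : tr I X) : normalized_state x -> pairing (e X) x = 1.
Proof. by move=> hx; apply: det_prob; apply: test11 hx (e_det X). Qed.

Lemma cast_det (Y Z B : sys) (eq : Y = Z) (f : tr Y B) :
  test [:: f] -> test [:: castTr eq (erefl B) f].
Proof. by case: Z / eq. Qed.

Lemma stpow_det (A : sys) (rho : tr I A) n :
  normalized_state rho -> normalized_state (stpow rho n).
Proof.
move=> hr; elim: n => [|n IH] /=; first exact: test_id.
by apply: cast_det; apply: testpar11.
Qed.

Lemma comp_e_cast (Y Z : sys) (eq : Y = Z) (g : tr I Y) :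
  comp (e Z) (castTr (erefl I) eq g) = comp (e Y) g.
Proof. by case: Z / eq. Qed.


Lemma dilation_pair1 (A C : sys) (rho : tr I A) N (Psi : tr I (tens (spow A N) C)) :
  normalized_state rho -> dilation e (stpow rho N) Psi ->
  pairing (e (tens (spow A N) C)) Psi = 1.
Proof.
move=> hr [_ hd].
have -> : e (tens (spow A N) C) = comp (e (tens (spow A N) I)) (par (idt (spow A N)) (e C)).
  case: (de (tens (spow A N) C)) => _ hu; symmetry; apply: hu.
  by apply: test11 (e_det _); apply: testpar11; [exact: test_id | exact: e_det].
rewrite /pairing -Defs.compA -(comp_e_cast (tenss1 (spow A N))) hd.
by apply: det_prob; apply: test11 (e_det _); apply: stpow_det.
Qed.

End Caus.
Section Cond.
Variables (R : realType) (T : OPT R) (e : forall A : sys T, tr T A (Defs.I T)).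
Local Notation sys := (sys T).
Local Notation tr := (@tr R T).
Local Notation I := (Defs.I T).
Hypothesis de : deterministic_effect e.
Hypothesis sc : strongly_causal T.

Lemma cond (X Y : sys) (tau : seq (tr I X)) (sig : tr I X -> seq (tr I Y)) :
  test tau -> (forall x, x \in tau -> test (sig x)) ->
  test (flatten [seq [seq pairing (e X) x *: g | g <- sig x] | x <- tau]).
Proof.
move=> ht hs.
have := @sc I X Y tau (fun i => [seq comp g (e X) | g <- sig (nth 0 tau i)]) ht.
have -> : flatten [seq [seq pairing (e X) x *: g | g <- sig x] | x <- tau] =
  flatten [seq [seq comp g (nth 0 tau i) | g <- [seq comp g (e X) | g <- sig (nth 0 tau i)]]
          | i <- iota 0 (size tau)].
  rewrite -{1}(mkseq_nth 0 tau) /mkseq -map_comp; congr flatten; apply: eq_map => i /=.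
  rewrite -map_comp; apply: eq_map => g /=.
  by rewrite -Defs.compA comp_scal.
apply => i hi; have := test_seq (e_det de X) (hs _ (mem_nth 0 hi)).
by rewrite /= cats0.
Qed.

End Cond.
Section Pure.
Variables (R : realType) (T : OPT R) (e : forall A : sys T, tr T A (Defs.I T)).
Local Notation sys := (sys T).
Local Notation tr := (@tr R T).
Local Notation I := (Defs.I T).
Hypothesis de : deterministic_effect e.
Hypothesis sc : strongly_causal T.

Lemma pure_rescale (X : sys) (tau : seq (tr I X)) (Phi Phib : tr I X) r :
  test tau -> Phi \in tau -> pure Phi -> normalized_state Phib ->
  Phi = r *: Phib -> r != 0 -> pure Phib.
Proof.
move=> ht hin hP hn hPhi hr0; split.
  by exists [:: Phib]; split; [exact: hn | rewrite mem_seq1].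
move=> s0 [[w hw] hsum] x hx.
have hc := cond de sc (sig := fun _ => s0 ++ w) ht (fun _ _ => hw).
have hr : pairing (e X) Phi = r.
  by rewrite hPhi /pairing compZr probZ -/(pairing _ _) (pairing_norm de hn) mulr1.
set F := fun x0 : tr I X => [seq pairing (e X) x0 *: g | g <- s0 ++ w].
have hperm : perm_eq (flatten [seq F x0 | x0 <- tau])
   ([seq r *: g | g <- s0] ++ ([seq r *: g | g <- w] ++ flatten [seq F x0 | x0 <- rem Phi tau])).
  have := perm_flatten (perm_map F (perm_to_rem hin)).
  by rewrite /= /F map_cat hr -catA.
have href : refinement Phi [seq r *: g | g <- s0].
  split; first by exists ([seq r *: g | g <- w] ++ flatten [seq F x0 | x0 <- rem Phi tau]);
    exact: test_perm hperm hc.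
  by rewrite big_map -scaler_sumr hsum hPhi.
have [lam [hl hx']] := hP.2 _ href (r *: x) (map_f _ hx).
exists lam; split => //; apply: (scalerI hr0).
by rewrite hx' hPhi !scalerA mulrC.
Qed.

End Pure.
Section Norm.
Variables (R : realType) (T : OPT R) (e : forall A : sys T, tr T A (Defs.I T)).
Local Notation sys := (sys T).
Local Notation tr := (@tr R T).
Local Notation I := (Defs.I T).
Hypothesis de : deterministic_effect e.

Lemma op_norm_sum (X : sys) (J : Type) (s : seq J) (F : J -> tr I X) :
  (op_norm e (\sum_(j <- s) F j) <= \sum_(j <- s) op_norm e (F j))%E.
Proof.
apply: ge_ereal_sup => _ [a ha <-].
rewrite comp_sumr prob_sum -sumEFin; apply: lee_sum => j _.
by apply: ereal_sup_ubound; exists a.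
Qed.

Lemma op_normZ (X : sys) (p : R) (d : tr I X) : 0 <= p ->
  op_norm e (p *: d) = (p%:E * op_norm e d)%E.
Proof.
move=> hp; rewrite /op_norm -ereal_supZl //; last first.
  apply/set0P; exists (prob (comp (2%:R *: e X - e X) d))%:E.
  by exists (e X) => //; exact: (e_effect de).
congr ereal_sup; rewrite image_comp; apply: eq_imagel => a _ /=.
by rewrite compZr probZ EFinM.
Qed.

Lemma cerrZ (X Y C : sys) (Enc : tr X Y) (Dec : tr Y X) (Psi : tr I (tens X C)) p :
  0 <= p -> cerr e Enc Dec (p *: Psi) = (p%:E * cerr e Enc Dec Psi)%E.
Proof. by move=> hp; rewrite /cerr compZr -scalerBr op_normZ. Qed.

Lemma cerr_sum (X Y C : sys) (Enc : tr X Y) (Dec : tr Y X) (J : Type) (s : seq J)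
  (F : J -> tr I (tens X C)) :
  (cerr e Enc Dec (\sum_(j <- s) F j) <= \sum_(j <- s) cerr e Enc Dec (F j))%E.
Proof. by rewrite /cerr comp_sumr -sumrB op_norm_sum. Qed.

End Norm.
Lemma perm_flatten_cat (U : eqType) (J : Type) (s : seq J) (f g : J -> seq U) :
  perm_eq (flatten [seq f x ++ g x | x <- s]) (flatten (map f s) ++ flatten (map g s)).
Proof.
elim: s => [|x s IH] //=.
by rewrite -!catA perm_cat2l perm_sym perm_catCA perm_cat2l perm_sym.
Qed.

Section Main.
Variables (R : realType) (T : OPT R) (e : forall A : sys T, tr T A (Defs.I T)).
Local Notation sys := (sys T).
Local Notation tr := (@tr R T).
Local Notation I := (Defs.I T).
Hypothesis de : deterministic_effect e.
Hypothesis sc : strongly_causal T.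
Hypothesis np : normalization_property e.
Hypothesis pr : pure_refinable T.

Lemma norm_state (Z : sys) (x : tr I Z) : normalized_state x -> is_state x.
Proof. by move=> h; exists [:: x]; split; [exact: h | rewrite mem_seq1]. Qed.

Lemma refine_exists (Z : sys) (Psi : tr I Z) :
  exists tv : seq (tr I Z) * seq (tr I Z), is_state Psi ->
    test (tv.1 ++ tv.2) /\ pairing (e Z) Psi *: \sum_(y <- tv.1) y = Psi /\
    (forall y, y \in tv.1 -> pure y /\ pairing (e Z) y != 0).
Proof.
case: (pselect (is_state Psi)) => hs; last by exists ([::], [::]).
have [Pb [hnb hP]] := np hs.
have [t [[[v htv] hsum] hpt]] := pr (norm_state hnb).
pose p := fun y => pairing (e Z) y != 0.
exists ([seq y <- t | p y], [seq y <- t | predC p y] ++ v) => _ /=.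
split; first apply: test_perm htv.
  by rewrite catA perm_cat2r perm_sym; exact: (permEl (perm_filterC p t)).
split.
  rewrite big_filter [in RHS]hP -hsum [X in _ = _ *: X](bigID p) /=.
  rewrite [X in _ = _ *: (_ + X)]big1_seq ?addr0 //.
  move=> y /andP [hy hyt]; have [yb [_ ->]] := np (hpt _ hyt).1.
  by move: hy; rewrite /p negbK => /eqP ->; rewrite scale0r.
by move=> y; rewrite mem_filter => /andP [hy hyt]; split => //; exact: hpt.
Qed.


Lemma norm_exists (Z : sys) (y : tr I Z) :
  exists yb, is_state y -> normalized_state yb /\ y = pairing (e Z) y *: yb.
Proof.
case: (pselect (is_state y)) => hs; last by exists y.
by have [yb hyb] := np hs; exists yb.
Qed.

Lemma sup_le1 (O A : sys) (rho : tr I A) N M (Enc : tr (spow A N) (spow O M))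
  (Dec : tr (spow O M) (spow A N)) :
  (ereal_sup (Epurerrs e rho Enc Dec) <= ereal_sup (Eerrs e rho Enc Dec))%E.
Proof.
apply: ge_ereal_sup => x [C [Om [d [hn [hdil [hd [href ->]]]]]]].
apply: ereal_sup_ubound; exists C, Om, [seq pPhi.1 *: pPhi.2 | pPhi <- d].
split => //; split => //.
rewrite big_map; apply: eq_big_seq => pPhi hin /=.
by rewrite (cerrZ de) //; case: (hd _ hin).
Qed.

Lemma sup_le2 (O A : sys) (rho : tr I A) N M (Enc : tr (spow A N) (spow O M))
  (Dec : tr (spow O M) (spow A N)) : normalized_state rho ->
  (ereal_sup (Eerrs e rho Enc Dec) <= ereal_sup (Epurerrs e rho Enc Dec))%E.
Proof.
move=> hrho.
apply: ge_ereal_sup => x [C [Psi [s [hdil [[[u hsu] hsum] ->]]]]].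
set Z := tens (spow A N) C.
have [G hG] := choice (@refine_exists Z).
have [Nb hNb] := choice (@norm_exists Z).
have hst : forall P, P \in s -> is_state P.
  by move=> P hP; exists (s ++ u); split => //; rewrite mem_cat hP.
have hstu : forall P, P \in s ++ u -> is_state P.
  by move=> P hP; exists (s ++ u); split.
pose q := fun P : tr I Z => pairing (e Z) P.
pose d := flatten [seq [seq (q P * q y, Nb y) | y <- (G P).1] | P <- s].
have hL : [seq pPhi.1 *: pPhi.2 | pPhi <- d] =
          flatten [seq [seq q P *: y | y <- (G P).1] | P <- s].
  rewrite map_flatten -map_comp; congr flatten; apply/eq_in_map => P hP /=.
  rewrite -map_comp; apply/eq_in_map => y hy /=.
  have [_ [_ hpP]] := hG P (hst P hP).
  have hys : is_state y := ((hpP y hy).1).1.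
  by rewrite -scalerA -(hNb y hys).2.
apply: (@le_trans _ _ (\sum_(pPhi <- d) ((pPhi.1)%:E * cerr e Enc Dec pPhi.2))%E); last first.
  apply: ereal_sup_ubound; exists C, Psi, d.
  split.
    have [Pb [hnb hP]] := np hdil.1.
    by rewrite (dilation_pair1 de hrho hdil) scale1r in hP; rewrite hP.
  split; first exact: hdil.
  split.
    move=> pPhi /flattenP [l /mapP [P hP ->] /mapP [y hy ->]] /=.
    have [htP [_ hpP]] := hG P (hst P hP).
    have [hpy hy0] := hpP y hy.
    have hys := hpy.1.
    have [hnbY hyeq] := hNb y hys.
    split; first by apply: mulr_ge0; apply: (state_ge0 de); [exact: hst | exact: hys].
    split => //.
    by apply: (pure_rescale de sc htP _ hpy hnbY hyeq hy0); rewrite mem_cat hy.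
  split; last by [].
  rewrite hL; split.
    have hc := cond de sc (sig := fun P => (G P).1 ++ (G P).2) hsu
      (fun P hP => (hG P (hstu P hP)).1).
    exists (flatten [seq [seq q P *: y | y <- (G P).2] | P <- s] ++
      flatten [seq [seq pairing (e Z) P *: g | g <- (G P).1 ++ (G P).2] | P <- u]).
    apply: test_perm hc.
    rewrite map_cat flatten_cat catA perm_cat2r.
    under eq_map do rewrite map_cat.
    exact: perm_flatten_cat.
  rewrite big_flatten /= -hsum big_map; apply: eq_big_seq => P hP.
  by rewrite big_map -scaler_sumr; exact: (hG P (hst P hP)).2.1.
rewrite /d big_flatten /= big_map big_seq [X in (_ <= X)%E]big_seq.
apply: lee_sum => P hP; rewrite big_map.
have [_ [hsP hpP]] := hG P (hst P hP).
have -> : cerr e Enc Dec P = cerr e Enc Dec (\sum_(y <- (G P).1) q P *: y).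
  by rewrite -scaler_sumr hsP.
apply: le_trans (cerr_sum _ _ _ _ _) _.
rewrite big_seq [X in (_ <= X)%E]big_seq; apply: lee_sum => y hy /=.
have hys := (hpP y hy).1.1.
have [_ hyeq] := hNb y hys.
have -> : cerr e Enc Dec (q P *: y) = cerr e Enc Dec ((q P * q y) *: Nb y).
  by rewrite -scalerA -hyeq.
rewrite (cerrZ de) //.
by apply: mulr_ge0; apply: (state_ge0 de); [exact: hst | exact: hys].
Qed.

End Main.

Theorem mainTheorem3 (R : realType) (T : OPT R) (e : forall A : sys T, tr T A (I T))
  (O : sys T) (A : sys T) (rho : tr T (I T) A) :
  deterministic_effect e ->
  strongly_causal T ->
  normalization_property e ->
  digitalizable O ->
  pure_refinable T ->
  normalized_state rho ->
  info_content e O rho = info_content_pur e O rho.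
Proof.
move=> de sc np _ pr hrho.
have hE : @Eset R T e O A rho = @Epurset R T e O A rho.
  apply: boolp.functional_extensionality_dep => N; apply: boolp.functional_extensionality_dep => M; apply: boolp.funext => eps.
  rewrite /Eset /Epurset; apply/seteqP; split => ED [h1 [h2 h3]]; split => //; split => //.
  have hs : ereal_sup (Eerrs e rho ED.1 ED.2) = ereal_sup (Epurerrs e rho ED.1 ED.2)
    by apply/le_anti/andP; split; [exact: (sup_le2 de sc np pr ED.1 ED.2 hrho) | exact: (sup_le1 de rho ED.1 ED.2)].
  by rewrite -hs.
  have hs : ereal_sup (Eerrs e rho ED.1 ED.2) = ereal_sup (Epurerrs e rho ED.1 ED.2)
    by apply/le_anti/andP; split; [exact: (sup_le2 de sc np pr ED.1 ED.2 hrho) | exact: (sup_le1 de rho ED.1 ED.2)].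
  by rewrite hs.
by rewrite /info_content /info_content_pur hE.
Qed.
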